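(* Let $1<p<\infty$ be fixed. Let $(\lambda_n)_{n\ge1}$ be positive real numbers, $\Lambda_n=\sum_{i=1}^n\lambda_i$, and let $A=(a_{n,k})$ be the weighted mean matrix with $a_{n,k}=\lambda_k/\Lambda_n$ for $1\le k\le n$ and $a_{n,k}=0$ for $k>n$. Suppose there exists a constant $L$ with $0<L<p$ such that for every integer $n\ge1$, \[ \sum_{k=1}^{n}\frac{\lambda_k}{\Lambda_n}\prod_{i=k}^{n}\Big(\frac{\Lambda_{i+1}/\lambda_{i+1}-L/p}{\Lambda_i/\lambda_i}\Big)^{1/(p-1)}\le \frac{p}{p-L}. \] Then $\|A\|_{p,p}\le \frac{p}{p-L}$.
   Context: For $p\ge1$, $l^p$ denotes the space of complex sequences $\mathbf a=(a_n)_{n\ge1}$ with $\|\mathbf a\|_p=(\sum_n|a_n|^p)^{1/p}<\infty$. For an infinite matrix $C=(c_{n,k})$, $\|C\|_{p,p}=\sup_{\|\mathbf a\|_p=1}\|C\mathbf a\|_p$, where $(C\mathbf a)_n=\sum_k c_{n,k}a_k$; equivalently the conclusion says $\sum_{n=1}^\infty\big|\sum_{k=1}^n\frac{\lambda_k a_k}{\Lambda_n}\big|^p\le\big(\frac{p}{p-L}\big)^p\sum_{n=1}^\infty|a_n|^p$ for all $\mathbf a\in l^p$. *)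

(* Defs.v *)
From Stdlib Require Import Reals Lra.
From Coquelicot Require Import Coquelicot.
Open Scope R_scope.

(* Sequences are indexed from 0 here: index j corresponds to index j+1 of the paper. *)

(* x^p for x >= 0 and real p > 0, with the convention 0^p = 0
   (Stdlib's Rpower 0 p = 1, which is wrong for the l^p norm). *)
Definition rpow (x p : R) : R := if Rle_dec x 0 then 0 else Rpower x p.

Definition Lam (lam : nat -> R) (n : nat) : R := sum_f_R0 lam n.

Fixpoint prod_from_to (f : nat -> R) (k n : nat) : R :=
  match n with
  | O => if Nat.leb k 0 then f 0%nat else 1
  | S m => if Nat.leb k (S m) then prod_from_to f k m * f (S m) else 1
  end.

Definition wmean (lam : nat -> R) (a : nat -> C) (n : nat) : C :=
  sum_n (fun k => Cmult (RtoC (lam k / Lam lam n)) (a k)) n.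

Definition cond_term (lam : nat -> R) (p L : R) (n : nat) : R :=
  sum_f_R0 (fun k => lam k / Lam lam n *
     prod_from_to (fun i =>
        Rpower ((Lam lam (S i) / lam (S i) - L / p) / (Lam lam i / lam i)) (1 / (p - 1)))
       k n) n.

(* Main.v *)
Require Import Defs.
From Stdlib Require Import Reals Lra Lia Psatz.
From Coquelicot Require Import Coquelicot.
Open Scope R_scope.

Lemma rpow_pos x p : 0 < x -> rpow x p = Rpower x p.
Proof. intros H. unfold rpow. destruct (Rle_dec x 0); [lra|reflexivity]. Qed.

Lemma rpow_ge0 x p : 0 <= rpow x p.
Proof. unfold rpow. destruct (Rle_dec x 0); [lra|]. unfold Rpower. left; apply exp_pos. Qed.

Lemma rpow_nonpos x p : x <= 0 -> rpow x p = 0.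
Proof. intros H. unfold rpow. destruct (Rle_dec x 0); [reflexivity|lra]. Qed.

Lemma rpow_mult x y p : 0 <= x -> 0 <= y -> rpow (x*y) p = rpow x p * rpow y p.
Proof.
  intros Hx Hy. destruct Hx as [Hx|Hx]; [|subst; rewrite Rmult_0_l, rpow_nonpos; lra].
  destruct Hy as [Hy|Hy]; [|subst; rewrite Rmult_0_r, (rpow_nonpos 0); lra].
  rewrite !rpow_pos; try nra. symmetry; apply Rpower_mult_distr; auto.
Qed.

Lemma rpow_le x y p : 0 <= p -> 0 <= x <= y -> rpow x p <= rpow y p.
Proof.
  intros Hp [H1 H2]. destruct H1 as [H1|H1].
  - rewrite !rpow_pos; try lra. apply Rle_Rpower_l; lra.
  - subst. rewrite rpow_nonpos by lra. apply rpow_ge0.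
Qed.

Lemma Rpower_pos x p : 0 < Rpower x p.
Proof. unfold Rpower; apply exp_pos. Qed.

Lemma bernoulli t p : 1 < p -> 0 < t -> 1 + p * (t - 1) <= Rpower t p.
Proof.
  intros Hp Ht.
  assert (E : Rpower t p = t * Rpower t (p-1)).
  { replace p with (1 + (p-1)) at 1 by ring. rewrite Rpower_plus, Rpower_1; auto. }
  assert (H1 : 1 + (p-1) * ln t <= Rpower t (p-1)).
  { unfold Rpower. rewrite Rmult_comm. apply exp_ineq1_le. }
  assert (H2 : t - 1 <= t * ln t).
  { pose proof (exp_ineq1_le (- ln t)) as H. rewrite exp_Ropp, exp_ln in H by auto.
    assert (t * (1 + - ln t) <= t * / t) by (apply Rmult_le_compat_l; lra).
    rewrite Rinv_r in H0 by lra. nra. }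
  rewrite E. nra.
Qed.

Lemma tangent x m p : 1 < p -> 0 < m -> 0 <= x ->
  Rpower m (p-1) * (p * x - (p-1) * m) <= rpow x p.
Proof.
  intros Hp Hm Hx. pose proof (Rpower_pos m (p-1)).
  destruct Hx as [Hx|Hx].
  2:{ subst. rewrite rpow_nonpos by lra. assert (0 < (p-1)*m) by nra. nra. }
  rewrite rpow_pos by auto.
  set (t := x / m). assert (Ht : 0 < t) by (unfold t; apply Rdiv_lt_0_compat; auto).
  assert (Ex : x = m * t) by (unfold t; field; apply Rgt_not_eq; assumption).
  pose proof (bernoulli t p Hp Ht).
  rewrite Ex, <- Rpower_mult_distr by auto.
  replace (Rpower m p) with (Rpower m (p-1) * m).
  2:{ replace p with ((p-1)+1) at 2 by ring. rewrite Rpower_plus, Rpower_1; auto. }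
  assert (0 < Rpower m (p-1) * m) by nra.
  nra.
Qed.

Lemma sum_lin (f g : nat -> R) u v n :
  sum_f_R0 (fun k => u * f k + v * g k) n = u * sum_f_R0 f n + v * sum_f_R0 g n.
Proof. induction n; simpl; [ring|rewrite IHn; ring]. Qed.

Lemma sum_ge0 (f : nat -> R) n : (forall k, (k <= n)%nat -> 0 <= f k) -> 0 <= sum_f_R0 f n.
Proof. intros H. induction n; simpl. apply H; lia. apply Rplus_le_le_0_compat; [apply IHn; intros; apply H; lia | apply H; lia]. Qed.

Lemma sum_le (f g : nat -> R) n : (forall k, (k <= n)%nat -> f k <= g k) -> sum_f_R0 f n <= sum_f_R0 g n.
Proof. intros H. induction n; simpl. apply H; lia. apply Rplus_le_compat; [apply IHn; intros; apply H; lia | apply H; lia]. Qed.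

Lemma sum_ext (f g : nat -> R) n : (forall k, (k <= n)%nat -> f k = g k) -> sum_f_R0 f n = sum_f_R0 g n.
Proof. intros H. induction n; simpl. apply H; lia. rewrite IHn by (intros; apply H; lia). rewrite H; auto. Qed.

Lemma jensen p (al x : nat -> R) n : 1 < p ->
  (forall k, 0 <= al k) -> (forall k, 0 <= x k) -> 0 < sum_f_R0 al n ->
  rpow (sum_f_R0 (fun k => al k * x k) n) p <=
  Rpower (sum_f_R0 al n) (p-1) * sum_f_R0 (fun k => al k * rpow (x k) p) n.
Proof.
  intros Hp Ha Hx HS.
  set (S := sum_f_R0 al n). set (M := sum_f_R0 (fun k => al k * x k) n).
  assert (HM : 0 <= M) by (apply sum_ge0; intros; apply Rmult_le_pos; auto).
  pose proof (Rpower_pos S (p-1)).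
  destruct HM as [HM|HM].
  2:{ rewrite <- HM, rpow_nonpos by lra. apply Rmult_le_pos; [lra|].
      apply sum_ge0; intros; apply Rmult_le_pos; auto; apply rpow_ge0. }
  set (m := M / S). assert (Hm : 0 < m) by (unfold m; apply Rdiv_lt_0_compat; auto).
  assert (Hsum : sum_f_R0 (fun k => p * Rpower m (p-1) * (al k * x k) + (-(p-1) * m * Rpower m (p-1)) * al k) n
     <= sum_f_R0 (fun k => al k * rpow (x k) p) n).
  { apply sum_le; intros k _. pose proof (tangent (x k) m p Hp Hm (Hx k)).
    pose proof (Ha k). nra. }
  rewrite sum_lin in Hsum. fold M S in Hsum.
  assert (E : m * S = M) by (unfold m; field; apply Rgt_not_eq; assumption).
  rewrite rpow_pos by auto.
  replace (Rpower M p) with (Rpower S (p-1) * (Rpower m (p-1) * M)).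
  2:{ rewrite <- Rmult_assoc.
      rewrite Rpower_mult_distr by auto. rewrite Rmult_comm with (r1 := S), E.
      replace (Rpower M p) with (Rpower M ((p-1)+1)) by (f_equal; ring). rewrite Rpower_plus, Rpower_1; auto. }
  apply Rmult_le_compat_l; [lra|].
  pose proof (Rpower_pos m (p-1)). nra.
Qed.

Lemma pft_lt f k n : (n < k)%nat -> prod_from_to f k n = 1.
Proof.
  intros H; destruct n; simpl.
  - destruct k; [lia|reflexivity].
  - destruct (Nat.leb k (S n)) eqn:E; [apply Nat.leb_le in E; lia|reflexivity].
Qed.

Lemma pft_S f k n : (k <= S n)%nat -> prod_from_to f k (S n) = prod_from_to f k n * f (S n).
Proof. intros H. simpl. destruct (Nat.leb k (S n)) eqn:E; [reflexivity|apply Nat.leb_gt in E; lia]. Qed.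

Lemma pft_pos f k n : (forall i, 0 < f i) -> 0 < prod_from_to f k n.
Proof.
  intros Hf. induction n; simpl.
  - destruct (Nat.leb k 0); [apply Hf|lra].
  - destruct (Nat.leb k (S n)); [apply Rmult_lt_0_compat; auto|lra].
Qed.

Lemma Rpower_1_base e : Rpower 1 e = 1.
Proof. unfold Rpower. rewrite ln_1, Rmult_0_r, exp_0. reflexivity. Qed.

Lemma pft_rpower f e k n : (forall i, 0 < f i) ->
  prod_from_to (fun i => Rpower (f i) e) k n = Rpower (prod_from_to f k n) e.
Proof.
  intros Hf. induction n; simpl.
  - destruct (Nat.leb k 0); [reflexivity|symmetry; apply Rpower_1_base].
  - destruct (Nat.leb k (S n)); [|symmetry; apply Rpower_1_base].
    rewrite IHn. apply Rpower_mult_distr; [apply pft_pos|]; auto.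
Qed.

Lemma Lam_S lam n : Lam lam (S n) = Lam lam n + lam (S n).
Proof. reflexivity. Qed.

Lemma Lam_ge lam n : (forall i, 0 < lam i) -> lam n <= Lam lam n.
Proof.
  intros H. destruct n; unfold Lam; simpl; [lra|].
  pose proof (sum_ge0 lam n (fun k _ => Rlt_le _ _ (H k))). lra.
Qed.

Lemma Lam_pos lam n : (forall i, 0 < lam i) -> 0 < Lam lam n.
Proof. intros H. pose proof (Lam_ge lam n H). pose proof (H n). lra. Qed.

Definition gg (lam : nat -> R) (p L : R) (i : nat) : R :=
  (Lam lam (S i) / lam (S i) - L / p) / (Lam lam i / lam i).

Lemma gg_pos lam p L i : 1 < p -> (forall n, 0 < lam n) -> 0 < L -> L < p -> 0 < gg lam p L i.
Proof.
  intros Hp Hl HL HLp. unfold gg.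
  pose proof (Lam_ge lam (S i) Hl). pose proof (Lam_pos lam i Hl). pose proof (Hl i). pose proof (Hl (S i)).
  apply Rdiv_lt_0_compat; [|apply Rdiv_lt_0_compat; auto].
  assert (1 <= Lam lam (S i) / lam (S i)).
  { apply (Rmult_le_reg_r (lam (S i))); auto. unfold Rdiv. rewrite Rmult_assoc, Rinv_l; lra. }
  assert (L / p < 1).
  { apply (Rmult_lt_reg_r p); [lra|]. unfold Rdiv. rewrite Rmult_assoc, Rinv_l; lra. }
  lra.
Qed.

Lemma core lam p L n : 1 < p -> (forall n, 0 < lam n) -> 0 < L -> L < p ->
  / lam n - / (gg lam p L n * lam (S n)) = (1 - L/p) / (gg lam p L n * Lam lam n).
Proof.
  intros Hp Hl HL HLp. pose proof (gg_pos lam p L n Hp Hl HL HLp) as Hg.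
  pose proof (Lam_pos lam n Hl) as Ha. pose proof (Hl n). pose proof (Hl (S n)).
  unfold gg in *. rewrite (Lam_S lam n) in *.
  set (a := Lam lam n) in *. set (l := lam n) in *. set (m := lam (S n)) in *.
  field. repeat split; try lra. nra.
Qed.

Definition GG lam p L k n := prod_from_to (gg lam p L) k n.

Definition HH lam p L (c : nat -> R) N :=
  sum_f_R0 (fun n => sum_f_R0 (fun k => (lam k / Lam lam n) / GG lam p L k n * c k) n) N.

Definition EE lam p L (c : nat -> R) N :=
  sum_f_R0 (fun k => c k * (1 - lam k / (GG lam p L k N * lam (S N)))) N.

Lemma sum_plus2 (f g : nat -> R) n : sum_f_R0 (fun k => f k + g k) n = sum_f_R0 f n + sum_f_R0 g n.
Proof. induction n; simpl; [ring|rewrite IHn; ring]. Qed.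

Lemma sum_scal (f : nat -> R) u n : sum_f_R0 (fun k => u * f k) n = u * sum_f_R0 f n.
Proof. induction n; simpl; [ring|rewrite IHn; ring]. Qed.

Lemma telescope lam p L c N : 1 < p -> (forall n, 0 < lam n) -> 0 < L -> L < p ->
  (1 - L/p) * HH lam p L c N = EE lam p L c N.
Proof.
  intros Hp Hl HL HLp. pose proof (gg_pos lam p L) as Hg.
  assert (GGpos : forall k n, 0 < GG lam p L k n) by (intros; apply pft_pos; intros; apply Hg; auto).
  induction N.
  - unfold HH, EE, GG; simpl. pose proof (core lam p L 0 Hp Hl HL HLp).
    pose proof (Hg 0%nat Hp Hl HL HLp). pose proof (Hl 0%nat). pose proof (Hl 1%nat).
    unfold Lam in *; simpl in *.
    assert (E : (1 - L/p) / (gg lam p L 0 * lam 0%nat) = / lam 0%nat - / (gg lam p L 0 * lam 1%nat)) by (rewrite H; reflexivity).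
    replace (1 - L / p) with ((1 - L/p) / (gg lam p L 0 * lam 0%nat) * (gg lam p L 0 * lam 0%nat)) at 1 by (field; lra).
    rewrite E. field. lra.
  - unfold HH. simpl sum_f_R0 at 1. fold (HH lam p L c N).
    rewrite Rmult_plus_distr_l, IHN.
    unfold EE.
    rewrite (sum_ext (fun k => c k * (1 - lam k / (GG lam p L k (S N) * lam (S (S N)))))
       (fun k => c k * (1 - lam k / (GG lam p L k N * lam (S N))) + (1 - L/p) * (lam k / Lam lam (S N) / GG lam p L k (S N) * c k))).
    2:{ intros k Hk. unfold GG. rewrite pft_S by lia. fold (GG lam p L k N).
        pose proof (core lam p L (S N) Hp Hl HL HLp) as Hc.
        pose proof (GGpos k N). pose proof (Hg (S N) Hp Hl HL HLp). pose proof (Lam_pos lam (S N) Hl).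
        pose proof (Hl (S N)). pose proof (Hl (S (S N))). pose proof (Hl k).
        set (G' := GG lam p L k N) in *. set (g := gg lam p L (S N)) in *.
        assert (Heq : c k * (1 - lam k / (G' * g * lam (S (S N)))) - (c k * (1 - lam k / (G' * lam (S N)))
           + (1 - L / p) * (lam k / Lam lam (S N) / (G' * g) * c k))
           = c k * lam k / G' * ((/ lam (S N) - / (g * lam (S (S N)))) - (1 - L/p) / (g * Lam lam (S N)))).
        { field. repeat split; lra. }
        rewrite Hc, Rminus_diag, Rmult_0_r in Heq. lra. }
    rewrite sum_plus2, sum_scal. rewrite !tech5.
    replace (GG lam p L (S N) N) with 1 by (unfold GG; rewrite pft_lt by lia; reflexivity).
    pose proof (Hl (S N)).
    replace (lam (S N) / (1 * lam (S N))) with 1 by (rewrite Rmult_1_l; unfold Rdiv; rewrite Rinv_r; lra). unfold Lam; ring.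
Qed.

Lemma step lam p L b n : 1 < p -> (forall n, 0 < lam n) -> 0 < L -> L < p ->
  (forall k, 0 <= b k) -> cond_term lam p L n <= p / (p - L) ->
  rpow (sum_f_R0 (fun k => lam k / Lam lam n * b k) n) p <=
  Rpower (p/(p-L)) (p-1) * sum_f_R0 (fun k => (lam k / Lam lam n) / GG lam p L k n * rpow (b k) p) n.
Proof.
  intros Hp Hl HL HLp Hb Hc.
  assert (GGpos : forall k n, 0 < GG lam p L k n) by (intros; apply pft_pos; intros; apply gg_pos; auto).
  set (e := 1 / (p-1)).
  set (P := fun k => Rpower (GG lam p L k n) e).
  assert (HP : forall k, 0 < P k) by (intros; apply Rpower_pos).
  assert (Hcond : cond_term lam p L n = sum_f_R0 (fun k => lam k / Lam lam n * P k) n).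
  { unfold cond_term. apply sum_ext. intros k _. f_equal. unfold P, GG.
    rewrite <- pft_rpower by (intros; apply gg_pos; auto). reflexivity. }
  assert (Hln : 0 < Lam lam n) by (apply Lam_pos; auto).
  assert (Hal : forall k, 0 <= lam k / Lam lam n * P k).
  { intros k. apply Rmult_le_pos; [|left; auto]. left; apply Rdiv_lt_0_compat; auto. }
  assert (HS : 0 < sum_f_R0 (fun k => lam k / Lam lam n * P k) n).
  { clear Hcond Hc. induction n; simpl. apply Rmult_lt_0_compat; auto; apply Rdiv_lt_0_compat; auto.
    apply Rplus_le_lt_0_compat.
    - apply sum_ge0. intros; auto.
    - apply Rmult_lt_0_compat; auto; apply Rdiv_lt_0_compat; auto. }
  pose proof (jensen p (fun k => lam k / Lam lam n * P k) (fun k => b k / P k) n Hp Hal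
     (fun k => Rdiv_le_0_compat _ _ (Hb k) (HP k)) HS) as J. cbv beta in J.
  rewrite (sum_ext (fun k => lam k / Lam lam n * P k * (b k / P k)) (fun k => lam k / Lam lam n * b k)) in J.
  2:{ intros k _. field. split; apply Rgt_not_eq; [exact Hln| exact (HP k)]. }
  rewrite (sum_ext (fun k => lam k / Lam lam n * P k * rpow (b k / P k) p)
            (fun k => (lam k / Lam lam n) / GG lam p L k n * rpow (b k) p)) in J.
  2:{ intros k _. change (b k / P k) with (b k * / P k). rewrite rpow_mult by (auto; left; apply Rinv_0_lt_compat; auto).
      rewrite (rpow_pos (/ P k)) by (apply Rinv_0_lt_compat; auto).
      assert (E : P k * Rpower (/ P k) p = / GG lam p L k n).
      { unfold P. cbv beta. rewrite <- Rpower_Ropp, Rpower_mult, <- Rpower_plus.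
        rewrite <- (Rpower_1 (GG lam p L k n)) at 2 by auto.
        rewrite <- Rpower_Ropp. f_equal. unfold e. field. apply Rgt_not_eq; lra. }
      unfold Rdiv. rewrite <- E. ring. }
  eapply Rle_trans; [exact J|].
  apply Rmult_le_compat_r.
  - apply sum_ge0. intros k _. apply Rmult_le_pos; [|apply rpow_ge0].
    left. apply Rdiv_lt_0_compat; [apply Rdiv_lt_0_compat|]; auto.
  - apply Rle_Rpower_l; [lra|]. rewrite <- Hcond. split; [rewrite Hcond; auto|auto].
Qed.

Lemma finite_bound lam p L b N : 1 < p -> (forall n, 0 < lam n) -> 0 < L -> L < p ->
  (forall n : nat, cond_term lam p L n <= p / (p - L)) ->
  (forall k, 0 <= b k) ->
  sum_f_R0 (fun n => rpow (sum_f_R0 (fun k => lam k / Lam lam n * b k) n) p) N <=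
  Rpower (p/(p-L)) p * sum_f_R0 (fun k => rpow (b k) p) N.
Proof.
  intros Hp Hl HL HLp Hc Hb.
  assert (GGpos : forall k n, 0 < GG lam p L k n) by (intros; apply pft_pos; intros; apply gg_pos; auto).
  eapply Rle_trans.
  { apply sum_le. intros n _. apply (step lam p L b n); auto. }
  rewrite sum_scal. fold (HH lam p L (fun k => rpow (b k) p) N).
  assert (Hq : 0 < 1 - L/p).
  { assert (L / p < 1) by (apply (Rmult_lt_reg_r p); [lra|]; unfold Rdiv; rewrite Rmult_assoc, Rinv_l; lra). lra. }
  assert (HE : EE lam p L (fun k => rpow (b k) p) N <= sum_f_R0 (fun k => rpow (b k) p) N).
  { unfold EE. apply sum_le. intros k _. pose proof (rpow_ge0 (b k) p).
    assert (0 <= lam k / (GG lam p L k N * lam (S N))).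
    { left; apply Rdiv_lt_0_compat; auto. apply Rmult_lt_0_compat; auto. }
    nra. }
  rewrite <- telescope in HE by auto.
  assert (HU : Rpower (p/(p-L)) p = Rpower (p/(p-L)) (p-1) * (p/(p-L))).
  { replace p with ((p-1)+1) at 3 by ring. rewrite Rpower_plus, Rpower_1; auto. apply Rdiv_lt_0_compat; lra. }
  rewrite HU, Rmult_assoc. apply Rmult_le_compat_l; [left; apply Rpower_pos|].
  assert (p / (p-L) = / (1 - L/p)) by (field; split; lra).
  rewrite H. apply (Rmult_le_reg_l (1 - L/p)); auto.
  rewrite <- Rmult_assoc, Rinv_r, Rmult_1_l by lra. exact HE.
Qed.

Lemma Cmod_sum_n (u : nat -> C) n : Cmod (sum_n u n) <= sum_f_R0 (fun k => Cmod (u k)) n.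
Proof.
  induction n.
  - rewrite sum_O. simpl. lra.
  - rewrite sum_Sn. simpl. eapply Rle_trans; [apply Cmod_triangle|]. lra.
Qed.

Lemma wmean_bound lam a n : (forall n, 0 < lam n) ->
  Cmod (wmean lam a n) <= sum_f_R0 (fun k => lam k / Lam lam n * Cmod (a k)) n.
Proof.
  intros Hl. unfold wmean. eapply Rle_trans; [apply Cmod_sum_n|].
  right. apply sum_ext. intros k _.
  rewrite Cmod_mult, Cmod_R, Rabs_pos_eq; [reflexivity|].
  left. apply Rdiv_lt_0_compat; [apply Hl|apply Lam_pos; auto].
Qed.

Lemma partial_le_series (g : nat -> R) N : (forall k, 0 <= g k) -> ex_series g ->
  sum_f_R0 g N <= Series g.
Proof.
  intros Hg He. rewrite <- sum_n_Reals. apply is_lim_seq_incr_compare.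
  - apply (Series_correct g He).
  - intros n. rewrite !sum_n_Reals. simpl. pose proof (Hg (S n)). lra.
Qed.

Theorem theorem3p1 (p L : R) (lam : nat -> R) :
  1 < p ->
  (forall n, 0 < lam n) ->
  0 < L -> L < p ->
  (forall n : nat, cond_term lam p L n <= p / (p - L)) ->
  forall a : nat -> C,
    ex_series (fun n => rpow (Cmod (a n)) p) ->
    ex_series (fun n => rpow (Cmod (wmean lam a n)) p) /\
    Series (fun n => rpow (Cmod (wmean lam a n)) p)
      <= rpow (p / (p - L)) p * Series (fun n => rpow (Cmod (a n)) p).
Proof.
  intros Hp Hl HL HLp Hc a Ha.
  set (f := fun n => rpow (Cmod (wmean lam a n)) p).
  set (g := fun n => rpow (Cmod (a n)) p).
  set (K := rpow (p / (p - L)) p).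
  assert (HK : K = Rpower (p/(p-L)) p) by (apply rpow_pos; apply Rdiv_lt_0_compat; lra).
  assert (Hg : forall k, 0 <= g k) by (intros; apply rpow_ge0).
  assert (Hf : forall k, 0 <= f k) by (intros; apply rpow_ge0).
  assert (HK0 : 0 <= K) by (apply rpow_ge0).
  assert (Hpart : forall N, sum_n f N <= K * Series g).
  { intros N. rewrite sum_n_Reals. eapply Rle_trans.
    - apply sum_le. intros n _. unfold f. apply rpow_le; [lra|].
      split; [apply Cmod_ge_0|apply wmean_bound; auto].
    - eapply Rle_trans. rewrite HK. apply (finite_bound lam p L (fun k => Cmod (a k)) N Hp Hl HL HLp Hc). intros; apply Cmod_ge_0.
      rewrite <- HK. apply Rmult_le_compat_l; auto. apply partial_le_series; auto. }
  assert (Hinc : forall n, sum_n f n <= sum_n f (S n)).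
  { intros n. rewrite !sum_n_Reals. simpl. pose proof (Hf (S n)). lra. }
  destruct (ex_finite_lim_seq_incr _ _ Hinc Hpart) as [l Hlim].
  assert (Hs : is_series f l) by exact Hlim.
  split. { exists l; exact Hs. }
  rewrite (is_series_unique f l Hs).
  pose proof (is_lim_seq_le (sum_n f) (fun _ => K * Series g) l (K * Series g) Hpart Hlim (is_lim_seq_const _)) as H.
  exact H.
Qed.
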